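(* $\mathfrak{L}(\mathrm{rtDVA}(2))\not\subseteq\bigcup_{k}\mathfrak{L}(\mathrm{rtD}k\mathrm{CA})$.
   Context: $\mathfrak{L}(A)$ denotes the class of languages recognized by machines of type $A$. A real-time deterministic vector automaton of dimension $k$ ($\mathrm{rtDVA}(k)$) is a 6-tuple $(Q,\Sigma,\delta,q_0,Q_a,v)$ with finite state set $Q$, initial state $q_0$, accept states $Q_a$, initial row vector $v\in\mathbb{Q}^k$ (freely chosen), and $\delta:Q\times(\Sigma\cup\{\cent,\$\})\times\{=,\neq\}\to Q\times S$, $S$ the set of $k\times k$ rational matrices. The input $w$ is read as $\cent w\$$ left to right, one symbol per step; in state $q$ reading $\sigma$, with $\omega$ equal to ''$=$'' iff the first vector entry equals $1$, if $\delta(q,\sigma,\omega)=(q',M)$ the machine goes to $q'$ and multiplies its row vector on the right by $M$. Acceptance: after processing $\$$, the state is in $Q_a$ and the first vector entry equals $1$. A real-time deterministic $k$-counter automaton (rtD$k$CA) is a 5-tuple $(Q,\Sigma,\delta,q_0,Q_a)$ with $k$ integer counters initially $0$, reading $\cent w\$$ one symbol per step; $\delta(q,\sigma,\theta)=(q',c)$ with $\theta\in\{0,\pm\}^k$ the zero/nonzero status of each counter and $c\in\{-1,0,1\}^k$ the counter increments; acceptance iff in an accept state after scanning $\$$. The union ranges over all $k\ge1$. *)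

(* Defs.v *)
From mathcomp Require Import all_boot all_order all_algebra.
Set Implicit Arguments. Unset Strict Implicit. Unset Printing Implicit Defensive.
Import GRing.Theory Num.Theory.
Local Open Scope ring_scope.

Inductive tape_sym (Sigma : Type) : Type :=
  | Cent : tape_sym Sigma
  | Dollar : tape_sym Sigma
  | Letter : Sigma -> tape_sym Sigma.
Arguments Cent {Sigma}. Arguments Dollar {Sigma}.

Definition tape (Sigma : Type) (w : seq Sigma) : seq (tape_sym Sigma) :=
  Cent :: map (@Letter Sigma) w ++ [:: Dollar].

(* First entry of a row vector (0 if the dimension is 0). *)
Definition first_entry (k : nat) (x : 'rV[rat]_k) : rat :=
  oapp (fun i : 'I_k => x ord0 i) 0 (insub 0%N).

(* A rtDVA(k) (Q, Sigma, delta, q0, Qa, v); the boolean argument of delta is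
   omega: true means "=" (first entry equals 1), false means "<>". *)
Definition dva_step (Sigma : Type) (Q : finType) (k : nat)
  (delta : Q -> tape_sym Sigma -> bool -> Q * 'M[rat]_k)
  (c : Q * 'rV[rat]_k) (s : tape_sym Sigma) : Q * 'rV[rat]_k :=
  let: (q, x) := c in
  let: (q', M) := delta q s (first_entry x == 1) in (q', x *m M).

Definition dva_accepts (Sigma : Type) (Q : finType) (k : nat)
  (delta : Q -> tape_sym Sigma -> bool -> Q * 'M[rat]_k)
  (q0 : Q) (Qa : {set Q}) (v : 'rV[rat]_k) (w : seq Sigma) : bool :=
  let: (q, x) := foldl (dva_step delta) (q0, v) (tape w) in
  (q \in Qa) && (first_entry x == 1).

Definition rtDVA_language (k : nat) (Sigma : finType) (L : pred (seq Sigma)) : Prop :=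
  exists (Q : finType) (delta : Q -> tape_sym Sigma -> bool -> Q * 'M[rat]_k)
         (q0 : Q) (Qa : {set Q}) (v : 'rV[rat]_k),
    forall w : seq Sigma, L w = dva_accepts delta q0 Qa v w.

Inductive incr : Type := Dec | Stay | Inc.
Definition incr_val (d : incr) : int :=
  match d with Dec => -1 | Stay => 0 | Inc => 1 end.

(* Status theta : true means the counter is 0, false means it is nonzero. *)
Definition ca_step (Sigma : Type) (Q : finType) (k : nat)
  (delta : Q -> tape_sym Sigma -> {ffun 'I_k -> bool} -> Q * {ffun 'I_k -> incr})
  (c : Q * {ffun 'I_k -> int}) (s : tape_sym Sigma) : Q * {ffun 'I_k -> int} :=
  let: (q, ctr) := c in
  let: (q', d) := delta q s [ffun i => ctr i == 0] in
  (q', [ffun i => ctr i + incr_val (d i)]).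

Definition ca_accepts (Sigma : Type) (Q : finType) (k : nat)
  (delta : Q -> tape_sym Sigma -> {ffun 'I_k -> bool} -> Q * {ffun 'I_k -> incr})
  (q0 : Q) (Qa : {set Q}) (w : seq Sigma) : bool :=
  (foldl (ca_step delta) (q0, [ffun => 0]) (tape w)).1 \in Qa.

Definition rtDkCA_language (k : nat) (Sigma : finType) (L : pred (seq Sigma)) : Prop :=
  exists (Q : finType)
         (delta : Q -> tape_sym Sigma -> {ffun 'I_k -> bool} -> Q * {ffun 'I_k -> incr})
         (q0 : Q) (Qa : {set Q}),
    forall w : seq Sigma, L w = ca_accepts delta q0 Qa w.

(* Main.v *)
Require Import Defs.
From mathcomp Require Import all_boot all_order all_algebra.
From mathcomp Require Import zify ring lra.
Set Implicit Arguments. Unset Strict Implicit. Unset Printing Implicit Defensive.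
Import GRing.Theory Num.Theory.

Lemma sq_le_exp t : (4 <= t)%N -> (t * t <= 2 ^ t)%N.
Proof.
elim: t => [|t IH] //; rewrite ltnS leq_eqVlt => /orP[/eqP <- //|Ht].
have := IH Ht; rewrite expnS; nia.
Qed.

Lemma growth m k : (0 < k)%N -> exists n, (m * (n.*2.+3) ^ k < 2 ^ n)%N.
Proof.
move=> k0; set c := (m + 2 * k)%N; set t := (c + 4)%N.
exists (2 ^ t).
have h1 : ((2 ^ t).*2.+3 <= 2 ^ (t + 2))%N.
  rewrite expnD (_ : 2 ^ 2 = 4)%N // -mul2n; have : (2 <= 2 ^ t)%N by rewrite -{1}(expn1 2) leq_exp2l // /t; lia.
  move: (2 ^ t) => x; lia.
have h2 : (((2 ^ t).*2.+3) ^ k <= 2 ^ ((t + 2) * k))%N.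
  by rewrite expnM leq_exp2r.
have h3 : (m < 2 ^ m)%N by apply: ltn_expl.
have h4 : (m + (t + 2) * k <= 2 ^ t)%N.
  apply: (leq_trans _ (sq_le_exp _)); last by rewrite /t; lia.
  rewrite /t /c; nia.
apply: (leq_ltn_trans (leq_mul (leqnn m) h2)).
apply: (@leq_trans (2 ^ m * 2 ^ ((t+2)*k))%N).
  by rewrite ltn_pmul2r ?expn_gt0.
by rewrite -expnD leq_exp2l.
Qed.

Local Open Scope ring_scope.

Definition fstep (x : rat) (s : option bool) : rat :=
  match s with Some b => 2 * x + (b : nat)%:R | None => x - 1 end.
Definition Lg (w : seq (option bool)) : bool := foldl fstep 1 w == 1.

Definition rv (x : rat) : 'rV[rat]_2 := \row_j (if j == ord0 then x else 1).

Definition mx_of (s : tape_sym (option bool)) : 'M[rat]_2 :=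
  match s with
  | Letter (Some b) => \matrix_(i, j) (if i == ord0 then (if j == ord0 then 2 else 0)
                                      else (if j == ord0 then (b : nat)%:R else 1))
  | Letter None => \matrix_(i, j) (if i == ord0 then (if j == ord0 then 1 else 0)
                                      else (if j == ord0 then -1 else 1))
  | _ => 1%:M
  end.

Definition dlt (q : unit) (s : tape_sym (option bool)) (b : bool) : unit * 'M[rat]_2 :=
  (tt, mx_of s).

Lemma rv_step x s : rv x *m mx_of (Letter s) = rv (fstep x s).
Proof.
apply/rowP => j; rewrite !mxE big_ord_recl big_ord1 !mxE.
case: s => [b|] /=; case: j => [[|[|//]] ?] /=; rewrite ?mxE /=;
  rewrite ?mulr0 ?mulr1 ?addr0 ?add0r //.
by rewrite mul1r mulrC.
Qed.

Lemma fold_dva x w :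
  foldl (dva_step dlt) (tt, rv x) (map (@Letter _) w) = (tt, rv (foldl fstep x w)).
Proof.
elim: w x => [|s w IH] x //=.
by rewrite -IH /dva_step /= rv_step.
Qed.

Lemma first_rv x : first_entry (rv x) = x.
Proof. by rewrite /first_entry insubT //= mxE. Qed.

Lemma dva_ok : rtDVA_language 2 Lg.
Proof.
exists (unit : finType), dlt, tt, setT, (rv 1) => w.
rewrite /dva_accepts /tape /= mulmx1 foldl_cat fold_dva /= mulmx1.
by rewrite in_setT first_rv.
Qed.

Definition valn (x : nat) (u : seq bool) : nat := foldl (fun x (b : bool) => 2 * x + b)%N x u.

Lemma fold_val x u : foldl fstep (x%:R) (map Some u) = (valn x u)%:R.
Proof.
elim: u x => [|b u IH] x //=.
by rewrite -IH natrD natrM.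
Qed.

Lemma fold_val1 u : foldl fstep 1 (map Some u) = (valn 1 u)%:R.
Proof. by rewrite -fold_val mulr1n. Qed.

Lemma fold_dec y j : foldl fstep y (nseq j None) = y - j%:R.
Proof.
elim: j y => [|j IH] y /=; first by rewrite subr0.
by rewrite IH -addrA -opprD [1 + _]addrC natr1.
Qed.

Lemma valn_ge x u : (x <= valn x u)%N.
Proof.
elim: u x => [|b u IH] x //=.
apply: leq_trans (IH _); lia.
Qed.

Lemma valn_inj x u u' : size u = size u' -> valn x u = valn x u' -> u = u'.
Proof.
elim/last_ind: u u' => [|u b IH] u'.
  by case: u'.
case/lastP: u' => [|u' b']; rewrite ?size_rcons //.
move=> /eqP; rewrite eqSS => /eqP hs.
rewrite /valn !foldl_rcons -/(valn x u) -/(valn x u') => h.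
have [e1 e2] : valn x u = valn x u' /\ b = b' by case: b b' h => [] []; lia.
by rewrite (IH u') // e2.
Qed.

Section Counter.
Variables (Q : finType) (k : nat)
  (delta : Q -> tape_sym (option bool) -> {ffun 'I_k -> bool} -> Q * {ffun 'I_k -> incr}).

Lemma ctr_bound s q (c : {ffun 'I_k -> int}) a :
  (forall i, absz (c i) <= a)%N ->
  forall i, (absz ((foldl (ca_step delta) (q, c) s).2 i) <= a + size s)%N.
Proof.
elim: s q c a => [|x s IH] q c a hc i /=; first by rewrite addn0.
rewrite /ca_step /=.
case: (delta q x _) => q' d.
rewrite -addSnnS; apply: IH => j; rewrite ffunE.
have := hc j; case: (d j) => /=; lia.
Qed.
End Counter.

Lemma tape_cat (u : seq bool) (v : seq (option bool)) :
  tape (map Some u ++ v) = (Cent :: map (@Letter _) (map Some u)) ++ (map (@Letter _) v ++ [:: Dollar]).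
Proof. by rewrite /tape map_cat /= catA. Qed.

Theorem theorem6 :
  exists (Sigma : finType) (L : pred (seq Sigma)),
    rtDVA_language 2 L /\ forall k : nat, (1 <= k)%N -> ~ rtDkCA_language k L.
Proof.
exists (option bool : finType), Lg; split; first exact: dva_ok.
move=> k k1 [Q [delta [q0 [Qa HL]]]].
have [n Hn] := growth #|Q| k1.
pose conf (u : seq bool) :=
  foldl (ca_step delta) (q0, [ffun => 0]) (Cent :: map (@Letter _) (map Some u)).
have cb : forall u : n.-tuple bool, forall i, (absz ((conf u).2 i) <= n.+1)%N.
  move=> u i; have := @ctr_bound Q k delta (Cent :: map (@Letter _) (map Some u)) q0
     [ffun => 0] 0 (fun j => ltac:(by rewrite ffunE)) i.
  by rewrite /= !size_map size_tuple.
pose enc (c : {ffun 'I_k -> int}) : {ffun 'I_k -> 'I_((n.+1).*2.+1)} :=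
  [ffun i => inord (absz (c i + (n.+1)%:Z))].
pose F (u : n.-tuple bool) := ((conf u).1, enc (conf u).2).
have injF : injective F.
  move=> u u' [e1 e2].
  have hc : conf u = conf u'.
    move: e1 e2 (cb u) (cb u'); rewrite /enc.
    case: (conf u) => q c; case: (conf u') => q' c' /= -> e2 b1 b2; congr pair.
    apply/ffunP => i; move/ffunP: e2 => /(_ i); rewrite !ffunE => /(congr1 val).
    have := b1 i; have := b2 i => h2 h1.
    rewrite /= !inordK -?mul2n; lia.
  have sep : forall v, Lg (map Some u ++ v) = Lg (map Some u' ++ v).
    by move=> v; rewrite !HL /ca_accepts !tape_cat !foldl_cat -/(conf u) -/(conf u') hc.
  apply: val_inj => /=.
  have hs : size u = size u' by rewrite !size_tuple.
  apply: (valn_inj (x := 1%N)) => //.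
  have := sep (nseq (valn 1 u - 1) None).
  rewrite /Lg !foldl_cat !fold_val1 !fold_dec.
  have g1 := valn_ge 1 u; have g2 := valn_ge 1 u'.
  rewrite natrB // mulr1n.
  have -> : (valn 1 u)%:R - ((valn 1 u)%:R - 1) == 1 :> rat by apply/eqP; ring.
  move=> /esym/eqP h.
  have : (valn 1 u)%:R = (valn 1 u')%:R :> rat by lra.
  by move/eqP; rewrite eqr_nat => /eqP.
have := @leq_card _ _ F injF.
rewrite card_tuple card_bool card_prod card_ffun !card_ord doubleS.
move: Hn; lia.
Qed.
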